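(* Let $\mu$ be a monotone system over $\{0,1\}^V$ and $\theta\in(0,1)$. Then the chain $P_{\mathrm{s\text{-}GD}}$ on $\Omega(\pi)$ is stochastically monotone.
   Context: Monotone system: for every $v$ and all feasible $\sigma\preceq\tau$ in $\{0,1\}^{V\setminus\{v\}}$ (coordinatewise), $\mu^\sigma_v(1)\le\mu^\tau_v(1)$. Tilted $(\theta*\mu)(\sigma)\propto\mu(\sigma)\theta^{\|\sigma\|_1}$. $\mathsf{lift}:\{0,1\}^V\to\{0,1,\star\}^V$ random: independently per coordinate $0\mapsto0$, $1\mapsto\star$ w.p. $1-\theta$, $1\mapsto1$ w.p. $\theta$; $\mathsf{contr}$: $0\mapsto0$, $1,\star\mapsto1$. $\pi$: law of $\mathsf{lift}(X)$, $X\sim\mu$, support $\Omega(\pi)$. $P_{\mathrm{s\text{-}GD}}$: from $X\in\Omega(\pi)$, pick $v$ uniformly; if $X_v=\star$ keep it; otherwise resample $X_v\in\{0,1\}$ from $(\theta*\mu)_v^{\sigma_{V\setminus\{v\}}}$ where $\sigma=\mathsf{contr}(X)$. Order $0<1<\star$, coordinatewise partial order. $P$ is stochastically monotone if $Pf$ is increasing for every increasing $f:\Omega(\pi)\to\mathbb R_{\ge0}$. *)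

(* Defs.v *)
From mathcomp Require Import all_boot all_order all_algebra.
Set Implicit Arguments. Unset Strict Implicit. Unset Printing Implicit Defensive.
Import Order.TTheory GRing.Theory Num.Theory.
Local Open Scope ring_scope.

Section Defs.
Variables (R : realFieldType) (V : finType).

Definition bconf := {ffun V -> bool}.
(* Lifted configurations in {0,1,star}^V, encoded by 'I_3 :
   0 = 0, 1 = 1, 2 = star.  The nat order on 'I_3 is the order 0 < 1 < star. *)
Definition lconf := {ffun V -> 'I_3}.

Definition is0 (a : 'I_3) : bool := (a == 0 :> nat).
Definition is1 (a : 'I_3) : bool := (a == 1 :> nat).
Definition isstar (a : 'I_3) : bool := (a == 2 :> nat).

Definition lle (X Y : lconf) : Prop := forall v, (X v <= Y v)%N.

Definition setb (s : bconf) (v : V) (b : bool) : bconf :=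
  [ffun u => if u == v then b else s u].
Definition setl (X : lconf) (v : V) (a : 'I_3) : lconf :=
  [ffun u => if u == v then a else X u].

Definition feasible (mu : bconf -> R) (v : V) (s : bconf) : Prop :=
  0 < mu (setb s v false) + mu (setb s v true).

Definition cond1 (mu : bconf -> R) (v : V) (s : bconf) : R :=
  mu (setb s v true) / (mu (setb s v false) + mu (setb s v true)).

Definition distribution (mu : bconf -> R) : Prop :=
  (forall s, 0 <= mu s) /\ \sum_(s : bconf) mu s = 1.

Definition monotone_system (mu : bconf -> R) : Prop :=
  forall (v : V) (s t : bconf),
    (forall u, u != v -> (s u <= t u)%O) ->
    feasible mu v s -> feasible mu v t ->
    cond1 mu v s <= cond1 mu v t.

Definition ones (s : bconf) : nat := #|[set u | s u]|.

Definition tilt (theta : R) (mu : bconf -> R) (s : bconf) : R :=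
  mu s * theta ^+ ones s / \sum_(t : bconf) mu t * theta ^+ ones t.

Definition contr (X : lconf) : bconf := [ffun v => ~~ is0 (X v)].

(* probability that lift(s) = X *)
Definition lift_prob (theta : R) (s : bconf) (X : lconf) : R :=
  \prod_(v : V)
    (if s v then (if is1 (X v) then theta else if isstar (X v) then 1 - theta else 0)
     else (if is0 (X v) then 1 else 0)).

Definition pi_law (theta : R) (mu : bconf -> R) (X : lconf) : R :=
  \sum_(s : bconf) mu s * lift_prob theta s X.

Definition Omega (theta : R) (mu : bconf -> R) (X : lconf) : bool :=
  0 < pi_law theta mu X.

Definition sgd_step (theta : R) (mu : bconf -> R) (v : V) (X Y : lconf) : R :=
  if isstar (X v) then (if Y == X then 1 else 0)
  else
    let p := cond1 (tilt theta mu) v (contr X) in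
    (if Y == setl X v 1 then p else 0) + (if Y == setl X v 0 then 1 - p else 0).

Definition P_sgd (theta : R) (mu : bconf -> R) (X Y : lconf) : R :=
  (#|V|%:R)^-1 * \sum_(v : V) sgd_step theta mu v X Y.

Definition Papply (theta : R) (mu : bconf -> R) (f : lconf -> R) (X : lconf) : R :=
  \sum_(Y : lconf | Omega theta mu Y) P_sgd theta mu X Y * f Y.

Definition increasing_on (theta : R) (mu : bconf -> R) (f : lconf -> R) : Prop :=
  forall X Y, Omega theta mu X -> Omega theta mu Y -> lle X Y -> f X <= f Y.

Definition stochastically_monotone (theta : R) (mu : bconf -> R) : Prop :=
  forall f : lconf -> R,
    (forall X, Omega theta mu X -> 0 <= f X) ->
    increasing_on theta mu f ->
    increasing_on theta mu (Papply theta mu f).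

End Defs.

(* Main.v *)
Require Import Defs.
From mathcomp Require Import all_boot all_order all_algebra.
From mathcomp Require Import ring lra.
Import Order.TTheory GRing.Theory Num.Theory.
Set Implicit Arguments. Unset Strict Implicit.
Local Open Scope ring_scope.
Lemma I3c (a : 'I_3) : [\/ [&& is0 a, ~~ is1 a & ~~ isstar a], [&& ~~is0 a, is1 a & ~~ isstar a] | [&& ~~is0 a, ~~is1 a & isstar a]].
Proof. by case: a => [[|[|[|n]]] Ha] //=; [constructor 1|constructor 2|constructor 3]. Qed.

Lemma key (R : realFieldType) (a b c d px py : R) :
  0 <= px -> px <= py -> py <= 1 ->
  (0 < px -> b <= d) -> (px < 1 -> 0 < py -> a <= d) -> (py < 1 -> a <= c) ->
  (0 < px -> py < 1 -> c <= d) ->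
  px * b + (1 - px) * a <= py * d + (1 - py) * c.
Proof.
move=> h0 h1 h2 H1 H2 H3 H4.
have [px0|pxp] := ltrP 0 px; last first.
  have -> : px = 0 by apply/le_anti; rewrite pxp h0.
  rewrite mul0r add0r subr0 mul1r.
  have [py1|py1] := ltrP py 1; last first.
    have -> : py = 1 by apply/le_anti; rewrite h2 py1.
    rewrite subrr mul0r addr0 mul1r; apply: H2; lra.
  have ac := H3 py1.
  have [py0|py0] := ltrP 0 py; last first.
    have -> : py = 0 by apply/le_anti; rewrite py0 (le_trans h0 h1).
    by rewrite mul0r add0r subr0 mul1r.
  have ad : a <= d by apply: H2 => //; lra.
  nra.
have bd := H1 px0.
have [py1|py1] := ltrP py 1; last first.
  have -> : py = 1 by apply/le_anti; rewrite h2 py1.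
  rewrite subrr mul0r addr0 mul1r.
  have [px1|px1] := ltrP px 1.
    have ad := H2 px1 (lt_le_trans px0 h1). nra.
  have -> : px = 1 by apply/le_anti; rewrite px1 (le_trans h1 h2).
  by rewrite subrr mul0r addr0 mul1r.
have cd := H4 px0 py1. have ac := H3 py1.
nra.
Qed.

Section Aux.
Variables (R : realFieldType) (V : finType) (mu : bconf V -> R) (theta : R).
Hypothesis mu_ge0 : forall s, 0 <= mu s.
Hypothesis th0 : 0 < theta.
Hypothesis th1 : theta < 1.

Lemma lift0 (s : bconf V) (X : lconf V) : s != contr X -> lift_prob theta s X = 0.
Proof.
move=> Hne.
have : ~~ [forall v, s v == contr X v].
  apply/negP => /forallP H; move/negP: Hne; apply; apply/eqP/ffunP => v; exact/eqP/H.
rewrite negb_forall => /existsP [v]; rewrite ffunE => Hv; rewrite /lift_prob (bigD1 v) //= .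
case: (I3c (X v)) => /and3P[a b c]; move: Hv; rewrite ?a ?b ?c /=;
  case: (s v) => //=; rewrite ?(negbTE a) ?(negbTE b) ?(negbTE c) ?mul0r //.
Qed.

Lemma liftpos (X : lconf V) : 0 < lift_prob theta (contr X) X.
Proof.
apply: prodr_gt0 => v _; rewrite ffunE.
case: (I3c (X v)) => /and3P[a b c]; rewrite ?a ?b ?c /= ?(negbTE a) ?(negbTE b) ?(negbTE c) //. by rewrite subr_gt0.
Qed.

Lemma OmegaE (X : lconf V) : Omega theta mu X = (0 < mu (contr X)).
Proof.
rewrite /Omega /pi_law (bigD1 (contr X)) //= big1 ?addr0; last first.
  by move=> s Hs; rewrite lift0 ?mulr0.
by rewrite pmulr_lgt0 // liftpos.
Qed.

Lemma setb_id (s : bconf V) v : setb s v (s v) = s.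
Proof. by apply/ffunP => u; rewrite ffunE; case: eqP => // ->. Qed.

Lemma contr1 (X : lconf V) v : contr (setl X v 1) = setb (contr X) v true.
Proof. by apply/ffunP => u; rewrite !ffunE; case: eqP. Qed.
Lemma contr0 (X : lconf V) v : contr (setl X v 0) = setb (contr X) v false.
Proof. by apply/ffunP => u; rewrite !ffunE; case: eqP. Qed.

Lemma ones_setb (s : bconf V) v : ones (setb s v true) = (ones (setb s v false)).+1.
Proof.
rewrite /ones.
have -> : [set u | setb s v true u] = v |: [set u | setb s v false u].
  by apply/setP => u; rewrite !inE !ffunE; case: eqP.
by rewrite cardsU1 !inE ffunE eqxx.
Qed.

Lemma cond1_tilt (s : bconf V) v : 0 < mu (setb s v false) + mu (setb s v true) ->
  cond1 (tilt theta mu) v s =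
  theta * mu (setb s v true) / (mu (setb s v false) + theta * mu (setb s v true)).
Proof.
move=> Hf; move: Hf.
set m0 := mu (setb s v false); set m1 := mu (setb s v true). move=> Hf.
set Z := \sum_(t : bconf V) mu t * theta ^+ ones t.
have wge0 t : 0 <= mu t * theta ^+ ones t by apply: mulr_ge0; [apply: mu_ge0 | apply: exprn_ge0; apply: ltW].
have Zge t : mu t * theta ^+ ones t <= Z.
  by rewrite /Z (bigD1 t) //= lerDl sumr_ge0.
set k := ones (setb s v false).
have Tpos : 0 < theta ^+ k by rewrite exprn_gt0.
have m0ge : 0 <= m0 := mu_ge0 _. have m1ge : 0 <= m1 := mu_ge0 _.
have Zpos : 0 < Z.
  have [m0p|] := ltrP 0 m0.
    apply: lt_le_trans (Zge (setb s v false)); exact: mulr_gt0.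
  move=> m0le; have m1p : 0 < m1 by lra.
  apply: lt_le_trans (Zge (setb s v true)); rewrite mulr_gt0 // exprn_gt0 //.
have Dpos : 0 < m0 + theta * m1.
  have := mulr_ge0 (ltW th0) m1ge; have [m0p|m0le] := ltrP 0 m0; first lra.
  have m1p : 0 < m1 by lra.
  have := mulr_gt0 th0 m1p; lra.
rewrite /cond1 /tilt ones_setb -/k -/m0 -/m1 -/Z exprS.
set T := theta ^+ k.
have Tpos' : 0 < T by [].
have -> : m0 * T / Z + m1 * (theta * T) / Z = (m0 + theta * m1) * T / Z.
  by ring.
by field; rewrite !gt_eqF.
Qed.


Lemma Dpos' (m0 m1 : R) : 0 <= m0 -> 0 <= m1 -> 0 < m0 + m1 -> 0 < m0 + theta * m1.
Proof.
move=> m0ge m1ge Hf.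
have := mulr_ge0 (ltW th0) m1ge; have [m0p|m0le] := ltrP 0 m0; first lra.
have m1p : 0 < m1 by lra.
have := mulr_gt0 th0 m1p; lra.
Qed.

Lemma ratio_mono (m0 m1 n0 n1 : R) : 0 <= m0 -> 0 <= m1 -> 0 < m0 + m1 ->
  0 <= n0 -> 0 <= n1 -> 0 < n0 + n1 ->
  m1 / (m0 + m1) <= n1 / (n0 + n1) ->
  theta * m1 / (m0 + theta * m1) <= theta * n1 / (n0 + theta * n1).
Proof.
move=> a b c d e f H.
have D1 := Dpos' a b c; have D2 := Dpos' d e f.
rewrite ler_pdivrMr // mulrAC ler_pdivlMr // in H.
rewrite ler_pdivrMr // mulrAC ler_pdivlMr //.
have H' : m1 * n0 <= n1 * m0 by nra.
have := ler_wpM2l (ltW th0) H'. nra.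
Qed.

Lemma p_props (m0 m1 : R) : 0 <= m0 -> 0 <= m1 -> 0 < m0 + m1 ->
  let p := theta * m1 / (m0 + theta * m1) in
  [/\ 0 <= p, p <= 1, 0 < p -> 0 < m1 & p < 1 -> 0 < m0].
Proof.
move=> a b c p; have D := Dpos' a b c.
split.
- rewrite /p; apply: divr_ge0; [apply: mulr_ge0 => //; exact: ltW | exact: ltW].
- by rewrite /p ler_pdivrMr // mul1r; lra.
- move=> pp; rewrite lt_neqAle b andbT; apply/eqP => m10.
  by move: pp; rewrite /p -m10 mulr0 mul0r ltxx.
- move=> pp; rewrite lt_neqAle a andbT; apply/eqP => m00.
  move: pp; rewrite /p -m00 add0r divff ?ltxx //.
  by rewrite -m00 add0r in D; rewrite gt_eqF.
Qed.

Lemma sum_pick (A : lconf V) (c : R) (G : lconf V -> R) :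
  \sum_(Y : lconf V) (if Y == A then c else 0) * G Y = c * G A.
Proof.
rewrite (bigD1 A) //= eqxx big1 ?addr0 // => Y /negbTE ->; exact: mul0r.
Qed.

Lemma step_sum v (X : lconf V) (G : lconf V -> R) :
  \sum_(Y : lconf V) sgd_step theta mu v X Y * G Y =
  if isstar (X v) then G X else
    cond1 (tilt theta mu) v (contr X) * G (setl X v 1) +
    (1 - cond1 (tilt theta mu) v (contr X)) * G (setl X v 0).
Proof.
case Hs: (isstar (X v)).
  under eq_bigr => Y _ do rewrite /sgd_step Hs.
  by rewrite sum_pick mul1r.
under eq_bigr => Y _ do rewrite /sgd_step Hs /= mulrDl.
by rewrite big_split /= !sum_pick.
Qed.


Lemma lle_setl (X Y : lconf V) v (i j : 'I_3) : lle X Y -> (i <= j)%N ->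
  lle (setl X v i) (setl Y v j).
Proof. by move=> H hij u; rewrite !ffunE; case: eqP. Qed.

Lemma lle_setl_star (X Y : lconf V) v (i : 'I_3) : lle X Y -> isstar (Y v) ->
  lle (setl X v i) Y.
Proof.
move=> H hs u; rewrite !ffunE; case: eqP => [->|] //.
move: hs; rewrite /isstar => /eqP ->; by case: i => [[|[|[|]]]].
Qed.

Lemma star_up (X Y : lconf V) v : lle X Y -> isstar (X v) -> isstar (Y v).
Proof.
move=> H; rewrite /isstar; have := H v; case: (X v) => [[|[|[|n]]] Hn]; case: (Y v) => [[|[|[|m]]] Hm] //.
Qed.

Lemma contr_le (X Y : lconf V) u : lle X Y -> (contr X u <= contr Y u)%O.
Proof.
move=> H; have := H u; rewrite !ffunE.
by case: (X u) => [[|[|[|n]]] Hn]; case: (Y u) => [[|[|[|m]]] Hm].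
Qed.

Lemma feasO (X : lconf V) v : Omega theta mu X ->
  0 < mu (setb (contr X) v false) + mu (setb (contr X) v true).
Proof.
rewrite OmegaE -{1}(setb_id (contr X) v).
have := mu_ge0 (setb (contr X) v false); have := mu_ge0 (setb (contr X) v true).
case: (contr X v) => ? ? ?; lra.
Qed.

Lemma main_mono (mono : monotone_system mu) : stochastically_monotone theta mu.
Proof.
move=> f fge finc X Y OX OY XY.
pose F := fun Z => if Omega theta mu Z then f Z else 0.
have PF Z : Papply theta mu f Z =
    #|V|%:R^-1 * \sum_v \sum_W sgd_step theta mu v Z W * F W.
  rewrite /Papply big_mkcond /= exchange_big /= mulr_sumr.
  apply: eq_bigr => W _; rewrite /F /P_sgd -mulr_suml; case: ifP => _.
    by rewrite mulrA.
  by rewrite !mulr0.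
have Fle Z W : Omega theta mu Z -> Omega theta mu W -> lle Z W -> F Z <= F W.
  by move=> OZ OW ZW; rewrite /F OZ OW; apply: finc.
have Fge Z : 0 <= F Z by rewrite /F; case: ifP => // /fge.
rewrite !PF; apply: ler_wpM2l; first by rewrite invr_ge0 ler0n.
apply: ler_sum => v _; rewrite !step_sum.
have O1 Z : Omega theta mu (setl Z v 1) = (0 < mu (setb (contr Z) v true)).
  by rewrite OmegaE contr1.
have O0 Z : Omega theta mu (setl Z v 0) = (0 < mu (setb (contr Z) v false)).
  by rewrite OmegaE contr0.
have fX := feasO v OX; have fY := feasO v OY.
rewrite (cond1_tilt fX) (cond1_tilt fY).
have [pX0 pX1 pXa pXb] := p_props (mu_ge0 _) (mu_ge0 _) fX.
have [pY0 pY1 pYa pYb] := p_props (mu_ge0 _) (mu_ge0 _) fY.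
have pXY : theta * mu (setb (contr X) v true) /
    (mu (setb (contr X) v false) + theta * mu (setb (contr X) v true)) <=
    theta * mu (setb (contr Y) v true) /
    (mu (setb (contr Y) v false) + theta * mu (setb (contr Y) v true)).
  apply: ratio_mono => //; try exact: mu_ge0.
  apply: mono => //; move=> u _; exact: contr_le.
case HX: (isstar (X v)).
  by rewrite (star_up XY HX); apply: Fle.
case HY: (isstar (Y v)).
  have := @key _ (F (setl X v 0)) (F (setl X v 1)) (F Y) (F Y) _ 1 pX0 pX1 (lexx _).
  rewrite mul1r subrr mul0r addr0; apply.
  - move=> h; apply: Fle => //; first by rewrite O1; exact: pXa.
    exact: lle_setl_star.
  - move=> h _; apply: Fle => //; first by rewrite O0; exact: pXb.
    exact: lle_setl_star.
  - by rewrite ltxx.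
  - by rewrite ltxx.
apply: key => //.
- move=> h; apply: Fle; rewrite ?O1; [exact: pXa | apply: pYa; exact: lt_le_trans h pXY | exact: lle_setl].
- move=> h h'; apply: Fle; rewrite ?O1 ?O0; [exact: pXb | exact: pYa | exact: lle_setl].
- move=> h; apply: Fle; rewrite ?O0; [apply: pXb; exact: le_lt_trans pXY h | exact: pYb | exact: lle_setl].
- move=> h h'; apply: Fle; rewrite ?O1 ?O0; [exact: pYb | apply: pYa; exact: lt_le_trans h pXY | apply: lle_setl => //; exact: (fun u => leqnn _)].
Qed.

End Aux.

Unset Implicit Arguments. Set Strict Implicit.

Theorem lemma5p3 (R : realFieldType) (V : finType) (mu : bconf V -> R) (theta : R) :
  distribution mu -> monotone_system mu -> 0 < theta -> theta < 1 ->
  stochastically_monotone theta mu.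
Proof. by move=> [mu_ge0 _] mono th0 th1; apply: main_mono. Qed.
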